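(* Let $r\ge 3$, $1\le t\le r-2$ and $n\ge 2$ be integers, and let $|X_\ell|=n$ for all $1\le\ell\le r$. Let $\mathcal F\subseteq X_1\times\dots\times X_r$ be a non-trivial $t$-intersecting family such that for every $1\le\ell\le r$, $\mathcal F$ is either $\ell$-shifted or $\ell$-shift-resistant, and such that $\mathcal F$ is not coordinate-wise shifted. Then $$|\mathcal F|\le (t+2)n^{r-t-1}-(t+1)n^{r-t-2}.$$
   Context: Let $X_\ell=[n_\ell]$ for $1\le \ell\le r$. For $A,B\in X_1\times\dots\times X_r$, write $A\cap B=\{\ell:A[\ell]=B[\ell]\}$ ($A[\ell]$ the $\ell$-th coordinate). $\mathcal F$ is $t$-intersecting if $|A\cap B|\ge t$ for all $A,B\in\mathcal F$; $\bigcap\mathcal F$ is the set of coordinates on which all members of $\mathcal F$ agree; a $t$-intersecting $\mathcal F$ is non-trivial if $|\bigcap\mathcal F|<t$. For $1\le\ell\le r$ and $1<j\le n_\ell$, the shift $S^{(\ell)}_j$ acts on $F\in\mathcal F$ by: if $F[\ell]=j$ and the sequence $F'$ obtained from $F$ by replacing its $\ell$-th coordinate by $1$ is not in $\mathcal F$, then $S^{(\ell)}_j(F)=F'$; otherwise $S^{(\ell)}_j(F)=F$; $S^{(\ell)}_j(\mathcal F)=\{S^{(\ell)}_j(F):F\in\mathcal F\}$. $\mathcal F$ is $\ell$-shifted if $S^{(\ell)}_j(\mathcal F)=\mathcal F$ for all $1<j\le n_\ell$, and coordinate-wise shifted if it is $\ell$-shifted for every $\ell$. A non-trivial $t$-intersecting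 family $\mathcal F$ is $\ell$-shift-resistant if there exists $x\in X_\ell\setminus\{1\}$ such that $|\bigcap S^{(\ell)}_x(\mathcal F)|=t$. *)

(* Defs.v *)
(* X_l = [n] is modelled by 'I_n, the paper's value j being
   the ordinal j-1; so the paper's distinguished value 1 is the ordinal 0. *)
From mathcomp Require Import all_boot all_order.
Set Implicit Arguments. Unset Strict Implicit. Unset Printing Implicit Defensive.

Section Defs.
Variables (r n : nat).
Notation seqT := {ffun 'I_r -> 'I_n}.

Definition agree (A B : seqT) : {set 'I_r} := [set l | A l == B l].

Definition t_intersecting (t : nat) (F : {set seqT}) : Prop :=
  forall A B, A \in F -> B \in F -> t <= #|agree A B|.

Definition common (F : {set seqT}) : {set 'I_r} :=
  [set l | [forall A in F, forall B in F, A l == B l]].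

Definition nontrivial_t_intersecting (t : nat) (F : {set seqT}) : Prop :=
  t_intersecting t F /\ #|common F| < t.

(* replace the l-th coordinate by the paper's value 1 (ordinal 0) *)
Definition reset1 (l : 'I_r) (A : seqT) : seqT :=
  [ffun k => if k == l then insubd (A l) 0 else A k].

Definition shift_elem (l : 'I_r) (j : 'I_n) (F : {set seqT}) (A : seqT) : seqT :=
  if (A l == j) && (reset1 l A \notin F) then reset1 l A else A.

Definition shift (l : 'I_r) (j : 'I_n) (F : {set seqT}) : {set seqT} :=
  [set shift_elem l j F A | A in F].

(* j ranges over paper values 1 < j <= n, i.e. ordinals with value <> 0 *)
Definition l_shifted (l : 'I_r) (F : {set seqT}) : Prop :=
  forall j : 'I_n, (0 < val j)%N -> shift l j F = F.

Definition coord_shifted (F : {set seqT}) : Prop :=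
  forall l : 'I_r, l_shifted l F.

Definition shift_resistant (t : nat) (l : 'I_r) (F : {set seqT}) : Prop :=
  nontrivial_t_intersecting t F /\
  exists x : 'I_n, (0 < val x)%N /\ #|common (shift l x F)| = t.
End Defs.

(* Main.v *)
Require Import Defs.
From mathcomp Require Import all_boot all_order.
From Stdlib Require Import Classical.
From mathcomp Require Import zify.
Set Implicit Arguments. Unset Strict Implicit. Unset Printing Implicit Defensive.

Section Main.
Variables (r n t : nat) (F : {set {ffun 'I_r -> 'I_n}}).
Hypothesis n_pos : 0 < n.
Notation seqT := {ffun 'I_r -> 'I_n}.

Lemma val_insubd0 (u : 'I_n) : val (insubd u 0 : 'I_n) = 0.
Proof. by rewrite val_insubd /= n_pos. Qed.

Lemma shift_elem_off l j (A : seqT) i : i != l -> shift_elem l j F A i = A i.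
Proof.
rewrite /shift_elem; case: ifP => // _ Hi; by rewrite ffunE (negbTE Hi).
Qed.

Lemma shift_elem_l l j (A : seqT) : val (shift_elem l j F A l) =
  if (A l == j) && (reset1 l A \notin F) then 0 else val (A l).
Proof. rewrite /shift_elem; case: ifP => _ //; by rewrite ffunE eqxx val_insubd0. Qed.

Lemma shift_elem_in l j (A : seqT) : A \in F -> shift_elem l j F A \in shift l j F.
Proof. by move=> HA; apply: imset_f. Qed.

Lemma commonP (G : {set seqT}) i A B : i \in common G -> A \in G -> B \in G -> A i = B i.
Proof.
rewrite inE => /forallP H HA HB.
have := H A; rewrite HA /= => /forallP/(_ B); rewrite HB /=; by move/eqP.
Qed.

Lemma commonI (G : {set seqT}) i :
  (forall A B, A \in G -> B \in G -> A i = B i) -> i \in common G.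
Proof.
move=> H; rewrite inE; apply/forallP => A; apply/implyP => HA.
apply/forallP => B; apply/implyP => HB; apply/eqP; exact: H.
Qed.

Section L.
Variables (l : 'I_r) (x : 'I_n).
Hypothesis Hx : 0 < val x.
Hypothesis HT : #|common (shift l x F)| = t.
Hypothesis Hnt : #|common F| < t.
Local Notation T := (common (shift l x F)).

Lemma off_common i : i \in T -> i != l -> i \in common F.
Proof.
move=> HiT Hil; apply: commonI => A B HA HB.
rewrite -(shift_elem_off x A Hil) -(shift_elem_off x B Hil).
apply: commonP HiT _ _; exact: shift_elem_in.
Qed.

Lemma l_notin_common : l \notin common F.
Proof.
apply/negP => Hl.
have : T \subset common F.
  apply/subsetP => i Hi; case: (eqVneq i l) => [->//|]; exact: off_common.
move/subset_leq_card; rewrite HT leqNgt Hnt; done.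
Qed.

Lemma l_in_T : l \in T.
Proof.
apply/negPn/negP => HlT.
have : T \subset common F.
  apply/subsetP => i Hi; apply: off_common => //; apply/eqP => E.
  by move: Hi; rewrite E (negbTE HlT).
move/subset_leq_card; rewrite HT leqNgt Hnt; done.
Qed.

Lemma exists_diff : exists A B, [/\ A \in F, B \in F & A l != B l].
Proof.
have := l_notin_common; rewrite inE negb_forall => /existsP [A].
rewrite negb_imply => /andP [HA]; rewrite negb_forall => /existsP [B].
rewrite negb_imply => /andP [HB HAB]; by exists A, B.
Qed.

Lemma shift_l_zero C : C \in F -> val (shift_elem l x F C l) = 0.
Proof.
move=> HC; have [A [B [HA HB HAB]]] := exists_diff.
have E : forall D, D \in F -> shift_elem l x F D l = shift_elem l x F C l.
  move=> D HD; apply: commonP l_in_T _ _; exact: shift_elem_in.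
case hA : ((A l == x) && (reset1 l A \notin F)).
  by rewrite -(E A HA) shift_elem_l hA.
case hB : ((B l == x) && (reset1 l B \notin F)).
  by rewrite -(E B HB) shift_elem_l hB.
have := E A HA; rewrite -(E B HB) /shift_elem hA hB => H.
by rewrite H eqxx in HAB.
Qed.

Lemma vals C : C \in F -> val (C l) = 0 \/ (C l = x /\ reset1 l C \notin F).
Proof.
move=> HC; have := shift_l_zero HC; rewrite shift_elem_l.
case: ifP => [/andP [/eqP -> H] _|_ ->]; by [right|left].
Qed.

Lemma exists_x0 : exists A B, [/\ A \in F, B \in F, A l = x & val (B l) = 0].
Proof.
have [A [B [HA HB HAB]]] := exists_diff.
case: (vals HA) => [HA0|[HAx _]]; case: (vals HB) => [HB0|[HBx _]].
- by move: HAB; rewrite (val_inj (etrans HA0 (esym HB0))) eqxx.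
- by exists B, A.
- by exists A, B.
- by move: HAB; rewrite HAx HBx eqxx.
Qed.
End L.

Definition zs (s : seq 'I_r) (C : seqT) : seqT :=
  [ffun i => if i \in s then insubd (C i) 0 else C i].

Lemma zs_in s C : (forall k, k \in s -> l_shifted k F) -> C \in F -> zs s C \in F.
Proof.
move=> Hs HC; elim: s Hs => [|a s IH] Hs.
  have -> : zs [::] C = C by apply/ffunP => i; rewrite ffunE.
  exact: HC.
have HD : zs s C \in F by apply: IH => k Hk; apply: Hs; rewrite inE Hk orbT.
set D := zs s C in HD *.
have HR : reset1 a D \in F.
  case: (posnP (val (D a))) => [H0|Hp].
    have -> : reset1 a D = D.
      apply/ffunP => i; rewrite ffunE; case: eqP => [->|//].
      by apply/val_inj; rewrite val_insubd0 H0.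
    exact: HD.
  apply/negPn/negP => HN.
  have Hsh := Hs a (mem_head _ _) (D a) Hp.
  have : shift_elem a (D a) F D \in shift a (D a) F by apply: shift_elem_in.
  by rewrite Hsh /shift_elem eqxx HN /= (negbTE HN).
have -> : zs (a :: s) C = reset1 a D; last exact: HR.
apply/ffunP => i; rewrite !ffunE inE; case: eqP => [->|_] /=.
  by apply/val_inj; rewrite !val_insubd0.
by [].
Qed.
End Main.

Lemma count_bound (r n t : nat) (F : {set {ffun 'I_r -> 'I_n}}) (n_pos : 0 < n)
  (T : {set 'I_r}) (l0 k : 'I_r) (x y : 'I_n) :
  #|T| = t -> l0 \in T -> k \notin T -> 0 < val y ->
  (forall i, i \in T -> i != l0 -> i \in common F) ->
  (forall C, C \in F -> val (C l0) = 0 \/ (C l0 = x /\ reset1 l0 C \notin F)) ->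
  (forall C, C \in F -> val (C k) = 0 \/ C k = y) ->
  #|F| <= 2 * n ^ (r - t - 1).
Proof.
move=> HT Hl0 Hk Hy Hcom Hv0 Hvk.
pose z := Ordinal n_pos.
pose phi (C : {ffun 'I_r -> 'I_n}) : {ffun 'I_r -> 'I_n} := [ffun i => if i \in T then z else C i].
pose P := fun i : 'I_r => (if i \in T then pred1 z else if i == k then pred2 z y else predT) : pred 'I_n.
have Hinj : {in F &, injective phi}.
  move=> C D HC HD E.
  have Eoff : forall i, i != l0 -> C i = D i.
    move=> i Hi; case: (boolP (i \in T)) => HiT.
      exact: commonP (Hcom i HiT Hi) HC HD.
    by have := congr1 (fun f : {ffun 'I_r -> 'I_n} => f i) E; rewrite /phi /= !ffunE (negbTE HiT).
  have Hres : forall C D, C \in F -> D \in F -> (forall i, i != l0 -> C i = D i) ->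
      val (C l0) = 0 -> reset1 l0 D = C.
    move=> C' D' HC' HD' Eo C0; apply/ffunP => j; rewrite ffunE.
    case: eqVneq => [->|Hj]; last by rewrite Eo.
    by apply/val_inj; rewrite (val_insubd0 n_pos) C0.
  apply/ffunP => i; case: (eqVneq i l0) => [->|]; last exact: Eoff.
  case: (Hv0 C HC) => [C0|[Cx CN]]; case: (Hv0 D HD) => [D0|[Dx DN]].
  - by apply: val_inj; rewrite C0 D0.
  - by move: DN; rewrite (Hres C D HC HD Eoff C0) HC.
  - by move: CN; rewrite (Hres D C HD HC (fun i Hi => esym (Eoff i Hi)) D0) HD.
  - by rewrite Cx Dx.
have Hsub : phi @: F \subset family P.
  apply/subsetP => _ /imsetP [C HC ->]; apply/familyP => i.
  rewrite /P ffunE; case: ifP => HiT; first by rewrite inE.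
  case: ifP => [/eqP ->|//].
  case: (Hvk C HC) => [H0|->]; rewrite inE; last by rewrite eqxx orbT.
  by apply/orP; left; apply/eqP/val_inj; rewrite H0.
rewrite -(card_in_imset Hinj); apply: leq_trans (subset_leq_card Hsub) _.
rewrite card_family foldrE big_image /=.
rewrite (bigID (mem T)) /= big1; last by move=> i Hi; rewrite /P Hi card1.
rewrite mul1n (bigD1 k) /=; last by [].
rewrite /P (negbTE Hk) eqxx card2.
have Hzy : z != y by apply/eqP => E; rewrite -E in Hy.
rewrite Hzy (eq_bigr (fun _ => n)); last first.
  by move=> i /andP [/negbTE -> /negbTE ->]; rewrite cardT size_enum_ord.
rewrite prod_nat_const.
have HC := cardsC T; rewrite card_ord HT in HC.
have HD := cardD1 k (~: T); rewrite inE Hk in HD.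
have -> : #|[pred i | (i \notin T) && (i != k)]| = r - t - 1.
  suff -> : #|[pred i | (i \notin T) && (i != k)]| = #|[predD1 ~: T & k]|.
    have HD' : #|~: T| = #|[predD1 ~: T & k]|.+1 by rewrite HD.
    lia.
  by apply: eq_card => i; rewrite !inE andbC.
by [].
Qed.

Theorem lemma2p3 (r t n : nat) (F : {set {ffun 'I_r -> 'I_n}}) :
  3 <= r -> 1 <= t -> t <= r - 2 -> 2 <= n ->
  nontrivial_t_intersecting t F ->
  (forall l : 'I_r, l_shifted l F \/ shift_resistant t l F) ->
  ~ coord_shifted F ->
  #|F| <= (t + 2) * n ^ (r - t - 1) - (t + 1) * n ^ (r - t - 2).
Proof.
move=> Hr Ht Htr Hn [Hti Hnt] Hsr Hncs.
have n_pos : 0 < n by apply: leq_trans Hn.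
have Hbound : 2 * n ^ (r - t - 1) <= (t + 2) * n ^ (r - t - 1) - (t + 1) * n ^ (r - t - 2).
  have -> : r - t - 1 = (r - t - 2).+1 by lia.
  rewrite expnS; set p := n ^ (r - t - 2); nia.
apply: leq_trans Hbound.
have [l0 Hl0] : exists l, ~ l_shifted l F by apply: not_all_ex_not.
have [_ [x [Hx HT]]] : shift_resistant t l0 F by case: (Hsr l0).
have Hl0T := l_in_T HT Hnt.
case: (classic (exists k, k \notin common (shift l0 x F) /\ ~ l_shifted k F)) => [[k [HkT Hk]] | Hall].
  have [_ [y [Hy HTk]]] : shift_resistant t k F by case: (Hsr k).
  apply: (count_bound (x:=x) n_pos HT Hl0T HkT Hy).
  - move=> i; exact: off_common.
  - move=> C HC; exact: (vals n_pos HT Hnt HC).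
  - move=> C HC; case: (vals n_pos HTk Hnt HC) => [->|[-> _]]; by [left|right].
exfalso.
have Hsh : forall k, k \in enum (~: common (shift l0 x F)) -> l_shifted k F.
  move=> k; rewrite mem_enum inE => HkT; apply: NNPP => Hn'; apply: Hall; by exists k.
have [A [B [HA HB HAx HB0]]] := exists_x0 n_pos HT Hnt.
have HA' := zs_in n_pos Hsh HA; have HB' := zs_in n_pos Hsh HB.
case: (vals n_pos HT Hnt HA') => [H0|[_ HN]].
  by move: H0; rewrite ffunE mem_enum in_setC Hl0T /= HAx => H0; move: Hx; change (0 < nat_of_ord x -> False); rewrite H0.
apply: (negP HN).
have -> : reset1 l0 (zs (enum (~: common (shift l0 x F))) A) = zs (enum (~: common (shift l0 x F))) B; last exact: HB'.
apply/ffunP => j; rewrite !ffunE !mem_enum !in_setC.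
case: eqVneq => [->|Hj].
  by apply/val_inj; rewrite (val_insubd0 n_pos) Hl0T /= HB0.
case: (boolP (j \in common (shift l0 x F))) => HjT /=.
  exact: commonP (off_common HjT Hj) HA HB.
by apply/val_inj; rewrite !(val_insubd0 n_pos).
Qed.
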